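(* For every $X\in\mathbb R^d$ and every $\psi\in\mathbb H$, $\mathbb M[(X+\zeta X)^*a\,D\psi]=0$.
   Context: $(\Omega,\mathcal G,\mu)$ is a probability space with an ergodic group $\{\tau_x\}_{x\in\mathbb R^d}$ of measure-preserving transformations, $(x,\omega)\mapsto g(\tau_x\omega)$ jointly measurable; $\mathbb M$ expectation, $(\cdot,\cdot)_2,|\cdot|_2$ the $L^2(\Omega)$ inner product and norm. $D_i$ is the $L^2(\Omega)$-generator of $g\mapsto g(\tau_{he_i}\cdot)$, $D\psi=(D_i\psi)_i$. $\sigma:\Omega\to\mathbb R^{d\times d}$ with $x\mapsto\sigma(\tau_x\omega)$ smooth, bounded with bounded derivatives uniformly in $\omega$; $a=\sigma\sigma^*$, $\Lambda I\le a\le\Lambda^{-1}I$; $b_j=\frac12D_ia_{ij}$ (summation convention). $\mathcal C=\mathrm{Span}\{g\star\phi:g\in L^\infty(\Omega),\phi\in C_c^\infty(\mathbb R^d)\}$, $g\star\phi(\omega)=\int g(\tau_x\omega)\phi(x)dx$; $\mathbb H$ the closure of $\mathcal C$ for $|\varphi|_2^2+|D\varphi|_2^2$. $U_\lambda f$ is the unique $w\in\mathbb H$ with $\lambda(w,\varphi)_2+\frac12(a_{ij}D_iw,D_j\varphi)_2=(f,\varphi)_2$ for all $\varphi\in\mathbb H$. $u^j_\lambda=U_\lambda(b_j)$; there exist $\zeta^j\in L^2(\Omega)^d$ with $\lambda|u^j_\lambda|_2^2+|Du^j_\lambda-\zeta^j|_2\to0$ as $\lambda\to0$; $\zeta$ is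 the matrix with entries $\zeta_{ij}=\zeta^j_i$. *)

(* Defs.v *)
From HB Require Import structures.
From mathcomp Require Import all_boot all_order all_algebra.
From mathcomp Require Import all_classical all_reals all_analysis.
Set Implicit Arguments. Unset Strict Implicit. Unset Printing Implicit Defensive.
Import Order.TTheory GRing.Theory Num.Theory.
Import numFieldNormedType.Exports.
Local Open Scope classical_set_scope.
Local Open Scope ring_scope.

Definition ecoord {R : realType} {d : nat} (i : 'I_d) : 'rV[R]_d := delta_mx 0 i.

Fixpoint iderive {R : realType} {d : nat} (s : seq 'I_d) (f : 'rV[R]_d -> R)
  : 'rV[R]_d -> R :=
  match s with
  | [::] => f
  | i :: s' => 'D_(ecoord i) (iderive s' f)
  end.

Definition smooth {R : realType} {d : nat} (f : 'rV[R]_d -> R) : Prop :=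
  forall s : seq 'I_d,
    (forall (i : 'I_d) (x : 'rV[R]_d), derivable (iderive s f) x (ecoord i))
    /\ continuous (iderive s f).

(* bounded (hence, for a continuous function, compact) support *)
Definition bounded_support {R : realType} {d : nat} (f : 'rV[R]_d -> R) : Prop :=
  exists r : R, forall x : 'rV[R]_d, r < `|x| -> f x = 0.

Definition set_coord {R : realType} {d : nat} (x : 'rV[R]_d) (i : 'I_d) (t : R)
  : 'rV[R]_d := \row_k (if k == i then t else x 0 k).

Fixpoint iint {R : realType} {d : nat} (s : seq 'I_d) (F : 'rV[R]_d -> R)
  (x : 'rV[R]_d) : R :=
  match s with
  | [::] => F x
  | i :: s' => Rintegral (@lebesgue_measure R) setT
                 (fun t => iint s' F (set_coord x i t))
  end.

(* Lebesgue integral over R^d (as an iterated integral, = by Fubini for the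
   bounded compactly supported measurable integrands used below) *)
Definition intRd {R : realType} {d : nat} (F : 'rV[R]_d -> R) : R :=
  iint (enum 'I_d) F 0.

Section Medium.
Context {R : realType} {d : nat} {disp : measure_display}
  {Omega : measurableType disp}.
Implicit Types (mu : probability Omega R) (tau : 'rV[R]_d -> Omega -> Omega).

Definition mp_group mu tau : Prop :=
  [/\ (forall x, measurable_fun setT (tau x)),
      (forall w, tau 0 w = w),
      (forall x y w, tau (x + y) w = tau x (tau y w)) &
      (forall x (A : set Omega), measurable A -> mu (tau x @^-1` A) = mu A)].

Definition ergodic mu tau : Prop :=
  forall A : set Omega, measurable A -> (forall x, tau x @^-1` A = A) ->
    mu A = 0%E \/ mu A = 1%E.

(* generators of the product sigma-algebra Borel(R^d) (x) G on R^d * Omega *)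
Definition prod_gen : set (set ('rV[R]_d * Omega)) :=
  [set S | (exists (i : 'I_d) (B : set R), measurable B /\ S = [set p : 'rV[R]_d * Omega | B (p.1 0 i)])
        \/ (exists A : set Omega, measurable A /\ S = [set p : 'rV[R]_d * Omega | A p.2])].

(* (x, w) |-> g (tau_x w) is jointly measurable for every measurable g *)
Definition jointly_measurable tau : Prop :=
  forall A : set Omega, measurable A -> <<s prod_gen >> [set p : 'rV[R]_d * Omega | A (tau p.1 p.2)].

Definition L2 mu (f : Omega -> R) : Prop :=
  measurable_fun setT f /\ (\int[mu]_w ((f w) ^+ 2)%:E < +oo)%E.

Definition ip mu (f g : Omega -> R) : R := Rintegral mu setT (fun w => f w * g w).
Definition expect mu (f : Omega -> R) : R := Rintegral mu setT f.

Definition L2sqdist mu (f g : Omega -> R) : \bar R :=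
  (\int[mu]_w (((f w - g w) ^+ 2)%:E))%E.

(* isD mu tau i g Dg : g is in the domain of the L^2-generator D_i of the
   group g |-> g(tau_{h e_i} .), and D_i g = Dg *)
Definition isD mu tau (i : 'I_d) (g Dg : Omega -> R) : Prop :=
  [/\ L2 mu g, L2 mu Dg &
    (fun h : R => (\int[mu]_w ((((g (tau (h *: ecoord i) w) - g w) / h - Dg w) ^+ 2)%:E))%E)
      @ (0 : R)^' --> (0 : \bar R)].

Definition conv tau (g : Omega -> R) (phi : 'rV[R]_d -> R) (w : Omega) : R :=
  intRd (fun x => g (tau x w) * phi x).

(* the class C = Span{ g * phi : g in L^infty, phi in C_c^infty(R^d) } *)
Definition inC tau (c : Omega -> R) : Prop :=
  exists (m : nat) (g : 'I_m -> Omega -> R) (phi : 'I_m -> 'rV[R]_d -> R),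
    [/\ (forall k, measurable_fun setT (g k) /\ exists M : R, forall w, `|g k w| <= M),
        (forall k, smooth (phi k) /\ bounded_support (phi k)) &
        c = (fun w => \sum_(k < m) conv tau (g k) (phi k) w)].

(* psi in H (closure of C for |.|_2^2 + |D .|_2^2), with D psi = Dpsi *)
Definition inH mu tau (psi : Omega -> R) (Dpsi : 'I_d -> Omega -> R) : Prop :=
  [/\ L2 mu psi, (forall i, isD mu tau i psi (Dpsi i)) &
    exists (c : nat -> Omega -> R) (Dc : nat -> 'I_d -> Omega -> R),
      [/\ (forall n, inC tau (c n) /\ forall i, isD mu tau i (c n) (Dc n i)),
          (fun n => L2sqdist mu (c n) psi) @ \oo --> 0%E &
          (forall i, (fun n => L2sqdist mu (Dc n i) (Dpsi i)) @ \oo --> 0%E)]].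

End Medium.

Definition amat {R : realType} {d : nat} {T : Type} (sigma : T -> 'M[R]_d) (w : T)
  : 'M[R]_d := sigma w *m (sigma w)^T.

(* b_j = 1/2 sum_i D_i a_ij, given da i j = D_i a_ij *)
Definition bvec {R : realType} {d : nat} {T : Type} (da : 'I_d -> 'I_d -> T -> R)
  (j : 'I_d) (w : T) : R := 2^-1 * \sum_(i < d) da i j w.

(* Main.v *)
Require Import Defs.
From HB Require Import structures.
From mathcomp Require Import all_boot all_order all_algebra.
From mathcomp Require Import all_classical all_reals all_analysis.
From mathcomp Require Import ring lra measurable_realfun measurable_fun_approximation.
Import Order.TTheory GRing.Theory Num.Theory.
Import numFieldNormedType.Exports.
Local Open Scope classical_set_scope.
Local Open Scope ring_scope.
Set Implicit Arguments. Unset Strict Implicit. Unset Printing Implicit Defensive.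


Section L2facts.
Context {R : realType} {disp : measure_display} {T : measurableType disp}
  (mu : probability T R).

Implicit Types (f g : T -> R).
Definition Int (h : T -> R) := mu.-integrable setT (EFin \o h).

Lemma Int_eq f g : (forall w, f w = g w) -> Int f -> Int g.
Proof. move=> fg; apply: eq_integrable => // x _ /=; by rewrite fg. Qed.

Lemma IntD f g : Int f -> Int g -> Int (fun w => f w + g w).
Proof. move=> hf hg; exact: (integrableD _ hf hg). Qed.

Lemma IntZ k f : Int f -> Int (fun w => k * f w).
Proof.
move=> hf; have := integrableZl measurableT k hf.
by apply: eq_integrable => // x _ /=; rewrite EFinM.
Qed.

Lemma IntN f : Int f -> Int (fun w => - f w).
Proof. by move=> hf; apply: (Int_eq _ (IntZ (-1) hf)) => x; rewrite mulN1r. Qed.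

Lemma IntB f g : Int f -> Int g -> Int (fun w => f w - g w).
Proof. by move=> hf hg; apply: IntD => //; exact: IntN. Qed.

Lemma IntC k : Int (fun _ => k).
Proof. exact: finite_measure_integrable_cst. Qed.

Lemma IntS (I : Type) (s : seq I) (h : I -> T -> R) :
  (forall i, Int (h i)) -> Int (fun w => \sum_(i <- s) h i w).
Proof.
move=> hh; elim: s => [|i s IH].
  by apply: (Int_eq _ (IntC 0)) => x; rewrite big_nil.
by apply: (Int_eq _ (IntD (hh i) IH)) => x; rewrite big_cons.
Qed.

Lemma Int_le (f g : T -> R) : measurable_fun setT f -> (forall w, `|f w| <= `|g w|) -> Int g -> Int f.
Proof.
move=> mf fg hg; apply: (le_integrable _ _ _ hg) => //.
  exact/measurable_EFinP.
by move=> x _ /=; rewrite lee_fin.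
Qed.

Lemma Int_meas f : Int f -> measurable_fun setT f.
Proof. by move=> /integrableP[/measurable_EFinP]. Qed.

Lemma L2_meas f : L2 mu f -> measurable_fun setT f.
Proof. by case. Qed.

Lemma L2_sq f : L2 mu f -> Int (fun w => f w ^+ 2).
Proof.
move=> [mf fi]; apply/integrableP; split.
  by apply/measurable_EFinP; exact: measurable_funX.
apply: le_lt_trans fi; rewrite le_eqVlt; apply/orP; left; apply/eqP.
by apply: eq_integral => x _ /=; rewrite ger0_norm // sqr_ge0.
Qed.

Lemma sq_L2 f : measurable_fun setT f -> Int (fun w => f w ^+ 2) -> L2 mu f.
Proof.
move=> mf /integrableP[_ fi]; split => //.
apply: le_lt_trans fi; rewrite le_eqVlt; apply/orP; left; apply/eqP.
by apply: eq_integral => x _ /=; rewrite ger0_norm // sqr_ge0.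
Qed.

Lemma sqr_normr (x : R) : `|x| ^+ 2 = x ^+ 2.
Proof. exact: real_normK (num_real x). Qed.

Lemma absM_le (x y : R) : `|x * y| <= x ^+ 2 + y ^+ 2.
Proof.
rewrite normrM -(sqr_normr x) -(sqr_normr y).
have := normr_ge0 x; have := normr_ge0 y.
set a := `|x|; set b := `|y|; move=> hb ha.
nra.
Qed.

Lemma L2_prod f g : L2 mu f -> L2 mu g -> Int (fun w => f w * g w).
Proof.
move=> hf hg; apply: (Int_le (g := fun w => f w ^+ 2 + g w ^+ 2)).
- exact: measurable_funM (L2_meas hf) (L2_meas hg).
- move=> w; rewrite (ger0_norm (x := _ + _)); first exact: absM_le.
  by rewrite addr_ge0 // sqr_ge0.
- exact: (IntD (L2_sq hf) (L2_sq hg)).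
Qed.

Lemma L2_Int f : L2 mu f -> Int f.
Proof.
move=> hf; apply: (Int_le (g := fun w => f w ^+ 2 + 1)).
- exact: L2_meas.
- move=> w; rewrite (ger0_norm (x := _ + _)); last by rewrite addr_ge0 // sqr_ge0.
  have := normr_ge0 (f w); rewrite -(sqr_normr (f w)); set a := `|f w|; nra.
- exact: (IntD (L2_sq hf) (IntC 1)).
Qed.

Lemma L2D f g : L2 mu f -> L2 mu g -> L2 mu (fun w => f w + g w).
Proof.
move=> hf hg; apply: sq_L2.
  exact: measurable_funD (L2_meas hf) (L2_meas hg).
apply: (Int_le (g := fun w => 2 * f w ^+ 2 + 2 * g w ^+ 2)).
- by apply: measurable_funX; exact: measurable_funD (L2_meas hf) (L2_meas hg).
- move=> w; rewrite ger0_norm ?sqr_ge0 // ger0_norm; last first.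
    by rewrite addr_ge0 // mulr_ge0 // sqr_ge0.
  set a := f w; set b := g w; have := sqr_ge0 (a - b); rewrite !expr2; nra.
- exact: (IntD (IntZ 2 (L2_sq hf)) (IntZ 2 (L2_sq hg))).
Qed.

Lemma L2Z k f : L2 mu f -> L2 mu (fun w => k * f w).
Proof.
move=> hf; apply: sq_L2.
  by apply: measurable_funM; [exact: measurable_cst | exact: L2_meas].
by apply: (Int_eq _ (IntZ (k ^+ 2) (L2_sq hf))) => w; rewrite exprMn.
Qed.

Lemma L2N f : L2 mu f -> L2 mu (fun w => - f w).
Proof.
move=> hf; have := L2Z (-1) hf; congr L2; apply/funext => w; by rewrite mulN1r.
Qed.

Lemma L2B f g : L2 mu f -> L2 mu g -> L2 mu (fun w => f w - g w).
Proof. by move=> hf hg; apply: L2D => //; exact: L2N. Qed.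

Lemma L2_bnd f C : measurable_fun setT f -> (forall w, `|f w| <= C) -> L2 mu f.
Proof.
move=> mf fC; apply: sq_L2 => //.
apply: (Int_le (g := fun _ => C ^+ 2)).
- exact: measurable_funX.
- move=> w /=; rewrite ger0_norm ?sqr_ge0 // ger0_norm ?sqr_ge0 //.
  by rewrite -(sqr_normr (f w)) lerXn2r // ?nnegrE ?(le_trans _ (fC w)).
- exact: IntC.
Qed.

Lemma L2_bndM f g C : measurable_fun setT f -> (forall w, `|f w| <= C) ->
  L2 mu g -> L2 mu (fun w => f w * g w).
Proof.
move=> mf fC hg; apply: sq_L2.
  exact: measurable_funM mf (L2_meas hg).
apply: (Int_le (g := fun w => C ^+ 2 * g w ^+ 2)).
- by apply: measurable_funX; exact: measurable_funM mf (L2_meas hg).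
- move=> w /=; rewrite ger0_norm ?sqr_ge0 //.
  have C0 : 0 <= C by exact: le_trans (fC w).
  rewrite (ger0_norm (x := C ^+ 2 * _)); last by rewrite mulr_ge0 // sqr_ge0.
  have h1 : f w ^+ 2 <= C ^+ 2 by rewrite -(sqr_normr (f w)) lerXn2r // nnegrE.
  rewrite exprMn; have h2 := sqr_ge0 (g w); nra.
- exact: (IntZ (C ^+ 2) (L2_sq hg)).
Qed.

End L2facts.


Lemma disc {R : realType} (A B C : R) : 0 <= C ->
  (forall s, 0 <= A + 2 * s * B + s ^+ 2 * C) -> B ^+ 2 <= A * C.
Proof.
move=> C0 H; have [Ce|Cn0] := eqVneq C 0.
  rewrite Ce mulr0; have [->|Bn0] := eqVneq B 0; first by rewrite expr0n.
  have := H (- (A + 1) / (2 * B)); rewrite Ce mulr0 addr0.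
  have -> : 2 * (- (A + 1) / (2 * B)) * B = - (A + 1) by field.
  lra.
have Cp : 0 < C by rewrite lt_def Cn0 C0.
have := H (- B / C).
have -> : A + 2 * (- B / C) * B + (- B / C) ^+ 2 * C = A - B ^+ 2 / C.
  by rewrite expr2; field.
by rewrite subr_ge0 ler_pdivrMr.
Qed.

Section IP.
Context {R : realType} {disp : measure_display} {T : measurableType disp}
  (mu : probability T R).
Implicit Types (f g : T -> R).

Lemma ip_ge0 f : 0 <= ip mu f f.
Proof. by apply: Rintegral_ge0 => w _; rewrite -expr2 sqr_ge0. Qed.

Lemma ipD1 f g h : L2 mu f -> L2 mu g -> L2 mu h ->
  ip mu (fun w => f w + g w) h = ip mu f h + ip mu g h.
Proof.
move=> hf hg hh; rewrite /ip -RintegralD //; last 2 first.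
- exact: L2_prod. - exact: L2_prod.
by apply: eq_Rintegral => w _; rewrite mulrDl.
Qed.

Lemma ipZ1 k f h : L2 mu f -> L2 mu h ->
  ip mu (fun w => k * f w) h = k * ip mu f h.
Proof.
move=> hf hh; rewrite /ip -RintegralZl //; last exact: L2_prod.
by apply: eq_Rintegral => w _; rewrite mulrA.
Qed.

Lemma ipC f g : ip mu f g = ip mu g f.
Proof. by rewrite /ip; apply: eq_Rintegral => w _; rewrite mulrC. Qed.

Lemma CS f g : L2 mu f -> L2 mu g -> ip mu f g ^+ 2 <= ip mu f f * ip mu g g.
Proof.
move=> hf hg; apply: disc; first exact: ip_ge0.
move=> s; have hsg := L2Z s hg.
have := ip_ge0 (fun w => f w + s * g w).
have -> : ip mu (fun w => f w + s * g w) (fun w => f w + s * g w) =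
  ip mu f f + ((2 * s) * ip mu f g + s ^+ 2 * ip mu g g).
  rewrite /ip -RintegralZl //; last exact: L2_prod.
  rewrite -RintegralZl //; last exact: L2_prod.
  rewrite -RintegralD //; last 2 first.
  - by apply: IntZ; exact: L2_prod.
  - by apply: IntZ; exact: L2_prod.
  rewrite -RintegralD //; last 2 first.
  - exact: L2_prod.
  - by apply: IntD; apply: IntZ; exact: L2_prod.
  by apply: eq_Rintegral => w _; rewrite !expr2; ring.
lra.
Qed.

Lemma CS_abs f g : L2 mu f -> L2 mu g ->
  `|ip mu f g| <= Num.sqrt (ip mu f f) * Num.sqrt (ip mu g g).
Proof.
move=> hf hg; rewrite -sqrtrM ?ip_ge0 // -sqrtr_sqr ler_sqrt; first exact: CS.
by rewrite mulr_ge0 ?ip_ge0.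
Qed.

Lemma Rint_cst (c : R) : Rintegral mu setT (fun _ => c) = c.
Proof. by rewrite Rintegral_cst //; move: (probability_setT mu) => /= ->; rewrite mulr1. Qed.

Lemma L2_one : L2 mu (fun _ => 1).
Proof.
have h : forall w : T, `|(fun _ : T => (1:R)) w| <= 1 by move=> w; rewrite normr1.
exact: L2_bnd (measurable_cst _) h.
Qed.

Lemma expect_abs f : L2 mu f -> `|expect mu f| <= Num.sqrt (ip mu f f).
Proof.
move=> hf; have := CS_abs hf L2_one.
have -> : ip mu (fun _ => 1) (fun _ => 1) = 1.
  by rewrite /ip; under eq_Rintegral do rewrite mulr1; rewrite Rint_cst.
rewrite sqrtr1 mulr1 /ip /expect.
by under eq_Rintegral do rewrite mulr1.
Qed.

Lemma ip_bnd f C : measurable_fun setT f -> (forall w, `|f w| <= C) ->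
  ip mu f f <= C ^+ 2.
Proof.
move=> mf fC; rewrite -[X in _ <= X]Rint_cst /ip.
apply: le_Rintegral => //.
- by apply: L2_prod; exact: L2_bnd fC.
- exact: IntC.
move=> w _; rewrite -expr2 -(sqr_normr (f w)) lerXn2r // nnegrE //.
exact: le_trans (fC w).
Qed.

End IP.


Section MP.
Context {R : realType} {disp : measure_display} {T : measurableType disp}
  (mu : probability T R).
Implicit Types (f g : T -> R).
Variables (t : T -> T) (mt : measurable_fun setT t)
  (pres : forall A, measurable A -> mu (t @^-1` A) = mu A).

Lemma mp_ge0 (G : T -> \bar R) : measurable_fun setT G -> (forall x, (0 <= G x)%E) ->
  (\int[mu]_x G (t x) = \int[mu]_x G x)%E.
Proof.
move=> mG G0.
have := @ge0_integral_pushforward _ _ T T R t mt mu setT G measurableT mG (fun y _ => G0 y).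
rewrite preimage_setT => <-.
apply: eq_measure_integral => A mA _.
exact: pres mA.
Qed.

Lemma mp_Int f : Int mu f -> Int mu (f \o t).
Proof.
move=> /integrableP[mf fi]; rewrite /Int; apply/integrableP; split.
  exact: (measurableT_comp mf mt).
have mG : measurable_fun setT (fun x => `|(f x)%:E|%E).
  exact: (measurableT_comp _ mf).
by rewrite (mp_ge0 (G := fun x => `|(f x)%:E|%E)).
Qed.

Lemma mp_Rint f : Int mu f -> Rintegral mu setT (f \o t) = Rintegral mu setT f.
Proof.
move=> hf; rewrite /Rintegral; congr fine.
have hft := mp_Int hf.
have := @integral_pushforward _ _ T T R t mt mu setT (EFin \o f).
rewrite preimage_setT => <- //.
- by apply: eq_measure_integral => A mA _; exact: pres mA.
- by case/integrableP: hf.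
Qed.

Lemma mp_L2 f : L2 mu f -> L2 mu (f \o t).
Proof.
move=> hf; apply: sq_L2.
  exact: (measurableT_comp (L2_meas hf) mt).
exact: (mp_Int (L2_sq hf)).
Qed.

End MP.


Section Lim.
Context {R : realType} {U : Type} {F : set_system U} {FF : ProperFilter F}.
Implicit Types (f g : U -> R).

Lemma le0_cvg (c : R) f : f @ F --> 0 -> (\forall x \near F, `|c| <= f x) -> c = 0.
Proof.
move=> hf H; have := limr_ge (cvgP _ hf) H.
rewrite (cvg_lim (@Rhausdorff R) hf).
by move=> hc; apply/normr0_eq0/le_anti; rewrite hc normr_ge0.
Qed.

Lemma cvg0D f g : f @ F --> 0 -> g @ F --> 0 -> (fun x => f x + g x) @ F --> 0.
Proof. by move=> hf hg; have H := cvgD hf hg; rewrite addr0 in H; exact: H. Qed.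

Lemma cvg0Mr f c : f @ F --> 0 -> (fun x => f x * c) @ F --> 0.
Proof. by move=> hf; have H := cvgM hf (@cvg_cst R c U F _); rewrite mul0r in H; exact: H. Qed.

Lemma cvg0Ml f c : f @ F --> 0 -> (fun x => c * f x) @ F --> 0.
Proof. by move=> hf; have H := cvgM (@cvg_cst R c U F _) hf; rewrite mulr0 in H; exact: H. Qed.

Lemma cvg0M f g (l : R) : f @ F --> 0 -> g @ F --> l -> (fun x => f x * g x) @ F --> 0.
Proof. by move=> hf hg; have H := cvgM hf hg; rewrite mul0r in H; exact: H. Qed.

Lemma cvg_sqrt0 f : f @ F --> 0 -> (fun x => Num.sqrt (f x)) @ F --> 0.
Proof.
move=> hf; have H := continuous_cvg _ (@sqrt_continuous R 0) hf.
by rewrite sqrtr0 in H; exact: H.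
Qed.

End Lim.

Lemma cvg_abs0 {R : realType} : (fun h : R => `|h|) @ 0^' --> (0:R).
Proof.
have H0 : (fun h : R => h) @ 0^' --> (0:R) by exact: cvg_within.
have H := cvg_norm H0.
by rewrite normr0 in H; exact: H.
Qed.


Section IBP.
Context {R : realType} {d : nat} {disp : measure_display} {T : measurableType disp}
  (mu : probability T R) (tau : 'rV[R]_d -> T -> T)
  (mtau : forall x, measurable_fun setT (tau x))
  (ptau : forall x A, measurable A -> mu (tau x @^-1` A) = mu A).
Implicit Types (f g : T -> R).

Lemma ip_eq1 f g h : (forall w, f w = g w) -> ip mu f h = ip mu g h.
Proof. by move=> fg; rewrite /ip; apply: eq_Rintegral => w _; rewrite fg. Qed.

Lemma ipB1 f g h : L2 mu f -> L2 mu g -> L2 mu h ->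
  ip mu (fun w => f w - g w) h = ip mu f h - ip mu g h.
Proof.
move=> hf hg hh; rewrite ipD1 //; last exact: L2N.
rewrite (@ip_eq1 (fun w => - g w) (fun w => -1 * g w) h); last by move=> w; rewrite mulN1r.
by rewrite ipZ1 // mulN1r.
Qed.

Lemma ipB2 f g h : L2 mu f -> L2 mu g -> L2 mu h ->
  ip mu h (fun w => f w - g w) = ip mu h f - ip mu h g.
Proof. by move=> hf hg hh; rewrite ipC ipB1 // ipC (ipC mu g). Qed.

Lemma ibp i g Dg phi Dphi B : isD mu tau i g Dg -> (forall w, `|g w| <= B) ->
  isD mu tau i phi Dphi -> ip mu Dg phi + ip mu g Dphi = 0.
Proof.
case=> Lg LDg cg gB [Lp LDp cp].
have gB' : forall w, `|g w| <= `|B| by move=> w; exact: le_trans (gB w) (ler_norm B).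
pose t h := tau (h *: ecoord i).
pose Qg h w := (g (t h w) - g w) / h.
pose Qp h w := (phi (t h w) - phi w) / h.
pose Eg h := ip mu (fun w => Qg h w - Dg w) (fun w => Qg h w - Dg w).
pose Ep h := ip mu (fun w => Qp h w - Dphi w) (fun w => Qp h w - Dphi w).
have cEg : Eg @ 0^' --> 0.
  have H := fine_cvg cg.
  have -> : Eg = fine \o (fun h : R => (\int[mu]_w ((((g (tau (h *: ecoord i) w) - g w) / h - Dg w) ^+ 2)%:E))%E).
    apply/funext => h; rewrite /Eg /ip /Rintegral /=; congr fine.
  exact: H.
have cEp : Ep @ 0^' --> 0.
  have H := fine_cvg cp.
  have -> : Ep = fine \o (fun h : R => (\int[mu]_w ((((phi (tau (h *: ecoord i) w) - phi w) / h - Dphi w) ^+ 2)%:E))%E).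
    apply/funext => h; rewrite /Ep /ip /Rintegral /=; congr fine.
  exact: H.
pose c1 := Num.sqrt (ip mu phi phi).
pose c2 := Num.sqrt (ip mu g g).
pose c3 := 2 * `|B|.
pose c4 := Num.sqrt (ip mu Dphi Dphi).
pose c5 := `|ip mu Dg Dphi|.
apply: (le0_cvg (F := 0^') (f := fun h => Num.sqrt (Eg h) * c1 + c2 * Num.sqrt (Ep h)
   + c3 * Num.sqrt (Ep h) + `|h| * (Num.sqrt (Eg h) * c4 + c5))).
  apply: cvg0D; first apply: cvg0D; first apply: cvg0D.
  - exact: cvg0Mr (cvg_sqrt0 cEg).
  - exact: cvg0Ml (cvg_sqrt0 cEp).
  - exact: cvg0Ml (cvg_sqrt0 cEp).
  - apply: cvg0M cvg_abs0 _.
    have H := cvgD (cvgM (cvg_sqrt0 cEg) (@cvg_cst R c4 R 0^' _)) (@cvg_cst R c5 R 0^' _).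
    exact: H.
near=> h.
have h0 : h != 0 by near: h; exact: nbhs_dnbhs_neq.
have mt : measurable_fun setT (t h) := mtau _.
have pt : forall A, measurable A -> mu (t h @^-1` A) = mu A := ptau _.
have Lgt : L2 mu (fun w => g (t h w)) := mp_L2 mt pt Lg.
have Lpt : L2 mu (fun w => phi (t h w)) := mp_L2 mt pt Lp.
have LQg : L2 mu (Qg h).
  have := L2Z h^-1 (L2B Lgt Lg); congr L2; apply/funext => w; by rewrite /Qg mulrC.
have LQp : L2 mu (Qp h).
  have := L2Z h^-1 (L2B Lpt Lp); congr L2; apply/funext => w; by rewrite /Qp mulrC.
pose r w := g w - g (t h w).
have Lr : L2 mu r := L2B Lg Lgt.
have I0 : ip mu (Qg h) phi + ip mu (fun w => g (t h w)) (Qp h) = 0.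
  have Igp : Int mu (fun w => g w * phi w) := L2_prod Lg Lp.
  have Igpt := mp_Int mt pt Igp.
  rewrite /ip -RintegralD //; [|exact: L2_prod..].
  transitivity (Rintegral mu setT (fun w => h^-1 * ((fun w => g w * phi w) \o t h) w - h^-1 * (g w * phi w))).
    by apply: eq_Rintegral => w _; rewrite /Qg /Qp /=; ring.
  rewrite RintegralB //; [|exact: IntZ..].
  rewrite RintegralZl // RintegralZl //.
  have E : Rintegral mu setT (fun x => ((fun w => g w * phi w) \o t h) x) =
    Rintegral mu setT (fun x => g x * phi x) by exact: (mp_Rint mt pt Igp).
  by rewrite E subrr.
have e1 := ipB1 LQg LDg Lp.
have e2 := ipB2 LQp LDp Lg.
have e3 := ipB1 Lg Lgt LQp.
have e4 := ipB2 LQp LDp Lr.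
have e5 : ip mu r Dphi = - h * ip mu (Qg h) Dphi.
  rewrite -ipZ1 //; apply: ip_eq1 => w; rewrite /r /Qg; field; exact: h0.
have e6 := ipB1 LQg LDg LDp.
have b1 := CS_abs (L2B LQg LDg) Lp.
have b2 := CS_abs Lg (L2B LQp LDp).
have b3 := CS_abs Lr (L2B LQp LDp).
have b4 := CS_abs (L2B LQg LDg) LDp.
have hr : Num.sqrt (ip mu r r) <= c3.
  have H : ip mu r r <= c3 ^+ 2.
    apply: ip_bnd; first exact: (L2_meas Lr).
    move=> w; rewrite /r /c3.
    have := gB' w; have := gB' (t h w); have := ler_normB (g w) (g (t h w)); lra.
  rewrite -(ger0_norm (x := c3)); last by rewrite /c3 mulr_ge0.
  by rewrite -sqrtr_sqr ler_sqrt ?sqr_ge0.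
have b3' : `|ip mu r (fun w => Qp h w - Dphi w)| <= c3 * Num.sqrt (Ep h).
  apply: le_trans b3 _; apply: ler_wpM2r => //; exact: sqrtr_ge0.
set X1 := ip mu (fun w => Qg h w - Dg w) phi in e1 b1.
set X2 := ip mu g (fun w => Qp h w - Dphi w) in e2 b2.
set X3 := ip mu r (fun w => Qp h w - Dphi w) in e4 b3'.
set X4 := ip mu (fun w => Qg h w - Dg w) Dphi in e6 b4.
have b1' : `|X1| <= Num.sqrt (Eg h) * c1 := b1.
have b2' : `|X2| <= c2 * Num.sqrt (Ep h) := b2.
have b4' : `|X4| <= Num.sqrt (Eg h) * c4 := b4.
have b45 : `|h * (X4 + ip mu Dg Dphi)| <= `|h| * (Num.sqrt (Eg h) * c4 + c5).
  rewrite normrM ler_wpM2l //; apply: le_trans (ler_normD _ _) _.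
  by apply: lerD.
have eT : ip mu Dg phi + ip mu g Dphi = - X1 - X2 + X3 - h * (X4 + ip mu Dg Dphi).
  rewrite -/r in e3.
  have e6' : X4 + ip mu Dg Dphi = ip mu (Qg h) Dphi by rewrite e6 subrK.
  have e5' : h * ip mu (Qg h) Dphi = - ip mu r Dphi by rewrite e5 mulNr opprK.
  rewrite e6' e5'.
  lra.
rewrite eT.
move: b1' b2' b3' b45; rewrite !ler_norml => /andP[b1l b1r] /andP[b2l b2r] /andP[b3l b3r] /andP[b4l b4r].
apply/andP; split; lra.
Unshelve. all: end_near.
Qed.

End IBP.


Section Sums.
Context {R : realType} {disp : measure_display} {T : measurableType disp}
  (mu : probability T R).

Lemma Rint_sum (I : Type) (s : seq I) (h : I -> T -> R) :
  (forall i, Int mu (h i)) ->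
  Rintegral mu setT (fun w => \sum_(i <- s) h i w) = \sum_(i <- s) Rintegral mu setT (h i).
Proof.
move=> hh; elim: s => [|i s IH].
  have -> : (fun w => \sum_(i <- [::]) h i w) = (fun _ => 0) by apply/funext => w; rewrite big_nil.
  by rewrite Rint_cst big_nil.
have -> : (fun w => \sum_(j <- i :: s) h j w) = (fun w => h i w + \sum_(j <- s) h j w).
  by apply/funext => w; rewrite big_cons.
rewrite RintegralD //; [by rewrite IH big_cons | exact: hh | exact: IntS].
Qed.

Lemma ip_sum1 (I : Type) (s : seq I) (h : I -> T -> R) (f : T -> R) :
  (forall i, L2 mu (h i)) -> L2 mu f ->
  ip mu (fun w => \sum_(i <- s) h i w) f = \sum_(i <- s) ip mu (h i) f.
Proof.
move=> hh hf; rewrite /ip -Rint_sum; last by move=> i; exact: L2_prod.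
by apply: eq_Rintegral => w _; rewrite mulr_suml.
Qed.

End Sums.

Lemma amatE {R : realType} {d : nat} {T : Type} (sigma : T -> 'M[R]_d) w i j :
  amat sigma w i j = \sum_k sigma w i k * sigma w j k.
Proof. by rewrite /amat !mxE; apply: eq_bigr => k _; rewrite mxE. Qed.

Lemma amat_sym {R : realType} {d : nat} {T : Type} (sigma : T -> 'M[R]_d) w i j :
  amat sigma w i j = amat sigma w j i.
Proof. by rewrite !amatE; apply: eq_bigr => k _; rewrite mulrC. Qed.


Lemma le_sum_point {R : realType} {d : nat} (F : 'I_d -> R) i :
  (forall j, 0 <= F j) -> F i <= \sum_j F j.
Proof.
move=> F0; rewrite (bigD1 i) //= lerDl; exact: sumr_ge0.
Qed.

Section LimId.
Context {R : realType} {d : nat} {disp : measure_display} {T : measurableType disp}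
  (mu : probability T R).

Lemma limit_id (a : 'I_d -> 'I_d -> T -> R) (A : R)
  (ha_meas : forall i k, measurable_fun setT (a i k))
  (ha_bnd : forall i k w, `|a i k w| <= A)
  (u : R -> T -> R) (Du : R -> 'I_d -> T -> R) (z : 'I_d -> T -> R)
  (psi : T -> R) (Dpsi : 'I_d -> T -> R) (bpsi : R)
  (Lu : forall lam, 0 < lam -> L2 mu (u lam))
  (LDu : forall lam, 0 < lam -> forall i, L2 mu (Du lam i))
  (Lz : forall i, L2 mu (z i)) (Lpsi : L2 mu psi) (LDpsi : forall k, L2 mu (Dpsi k))
  (weak : forall lam, 0 < lam -> lam * ip mu (u lam) psi
      + 2^-1 * expect mu (fun w => \sum_(i < d) \sum_(k < d) a i k w * Du lam i w * Dpsi k w)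
      = bpsi)
  (conv : (fun lam => lam * ip mu (u lam) (u lam)
      + Num.sqrt (\sum_(i < d) ip mu (fun w => Du lam i w - z i w) (fun w => Du lam i w - z i w)))
      @ 0^'+ --> 0) :
  2^-1 * expect mu (fun w => \sum_(i < d) \sum_(k < d) a i k w * z i w * Dpsi k w) = bpsi.
Proof.
pose G i k w := a i k w * Dpsi k w.
have LG : forall i k, L2 mu (G i k).
  by move=> i k; apply: L2_bndM (ha_meas i k) (ha_bnd i k) (LDpsi k).
have Eexp : forall (v : 'I_d -> T -> R), (forall i, L2 mu (v i)) ->
    expect mu (fun w => \sum_(i < d) \sum_(k < d) a i k w * v i w * Dpsi k w)
    = \sum_(i < d) \sum_(k < d) ip mu (v i) (G i k).
  move=> v Lv; rewrite /expect.
  transitivity (Rintegral mu setT (fun w => \sum_(i < d) \sum_(k < d) v i w * G i k w)).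
    by apply: eq_Rintegral => w _; apply: eq_bigr => i _; apply: eq_bigr => k _; rewrite /G; ring.
  rewrite Rint_sum; last by move=> i; apply: IntS => k; exact: L2_prod.
  apply: eq_bigr => i _; rewrite Rint_sum //; move=> k; exact: L2_prod.
set W := expect mu _.
pose Tj lam := lam * ip mu (u lam) (u lam)
      + Num.sqrt (\sum_(i < d) ip mu (fun w => Du lam i w - z i w) (fun w => Du lam i w - z i w)).
pose K := \sum_(i < d) \sum_(k < d) Num.sqrt (ip mu (G i k) (G i k)).
pose c1 := Num.sqrt (ip mu psi psi).
apply/eqP; rewrite -subr_eq0; apply/eqP.
apply: (le0_cvg (F := 0^'+) (f := fun lam => Num.sqrt (Tj lam) * c1 + Tj lam * (2^-1 * K))).
  apply: cvg0D; [exact: cvg0Mr (cvg_sqrt0 conv) | exact: cvg0Mr conv].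
near=> lam.
have lam0 : 0 < lam by near: lam; exact: nbhs_right_gt.
have lam1 : lam <= 1 by near: lam; exact: nbhs_right_le.
have Lul := Lu _ lam0.
have LDul := LDu _ lam0.
have E1 := Eexp _ LDul.
have E2 : W = \sum_(i < d) \sum_(k < d) ip mu (z i) (G i k) by exact: Eexp.
have Ediff : expect mu (fun w => \sum_(i < d) \sum_(k < d) a i k w * Du lam i w * Dpsi k w) - W
    = \sum_(i < d) \sum_(k < d) ip mu (fun w => Du lam i w - z i w) (G i k).
  rewrite E1 E2 -sumrB; apply: eq_bigr => i _; rewrite -sumrB; apply: eq_bigr => k _.
  by rewrite ipB1.
have hw := weak _ lam0.
set S := \sum_(i < d) ip mu (fun w => Du lam i w - z i w) (fun w => Du lam i w - z i w).
have S0 : 0 <= S by apply: sumr_ge0 => i _; exact: ip_ge0.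
have uu0 : 0 <= lam * ip mu (u lam) (u lam) by rewrite mulr_ge0 ?ip_ge0 // ltW.
have hT : lam * ip mu (u lam) (u lam) <= Tj lam by rewrite /Tj lerDl sqrtr_ge0.
have hT' : Num.sqrt S <= Tj lam by rewrite /Tj lerDr.
have bu : `|lam * ip mu (u lam) psi| <= Num.sqrt (Tj lam) * c1.
  rewrite normrM (gtr0_norm lam0).
  have h1 : lam * `|ip mu (u lam) psi| <= lam * (Num.sqrt (ip mu (u lam) (u lam)) * c1).
    by rewrite ler_pM2l //; exact: CS_abs.
  apply: le_trans h1 _.
  rewrite mulrA ler_wpM2r ?sqrtr_ge0 //.
  have el : lam * Num.sqrt (ip mu (u lam) (u lam)) = Num.sqrt (lam ^+ 2 * ip mu (u lam) (u lam)).
    by rewrite sqrtrM ?sqr_ge0 // sqrtr_sqr gtr0_norm.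
  rewrite el ler_sqrt; last exact: le_trans uu0 hT.
  apply: le_trans _ hT; rewrite expr2 -mulrA; exact: ler_piMl.
have be : `|\sum_(i < d) \sum_(k < d) ip mu (fun w => Du lam i w - z i w) (G i k)| <= Tj lam * K.
  apply: le_trans (ler_norm_sum _ _ _) _; rewrite /K mulr_sumr; apply: ler_sum => i _.
  apply: le_trans (ler_norm_sum _ _ _) _; rewrite mulr_sumr; apply: ler_sum => k _.
  apply: le_trans (CS_abs (L2B (LDul i) (Lz i)) (LG i k)) _.
  apply: ler_wpM2r; first exact: sqrtr_ge0.
  apply: le_trans hT'; rewrite ler_sqrt //.
  by apply: (le_sum_point (F := fun i => ip mu (fun w => Du lam i w - z i w) (fun w => Du lam i w - z i w))) => j; exact: ip_ge0.
set P := ip mu (u lam) psi in hw bu.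
set E := expect mu _ in hw Ediff.
set Q := \sum_(i < d) \sum_(k < d) _ in Ediff be.
have eq : 2^-1 * W - bpsi = - (lam * P) - 2^-1 * Q.
  by rewrite -hw -Ediff; ring.
rewrite eq; move: bu be; rewrite !ler_norml => /andP[b1 b2] /andP[b3 b4].
have TK : Tj lam * (2^-1 * K) = 2^-1 * (Tj lam * K) by ring.
rewrite TK; apply/andP; split; lra.
Unshelve. all: end_near.
Qed.

End LimId.


Lemma mx_expand {R : realType} {d : nat} (X : 'cV[R]_d) (Z Am : 'M[R]_d) (v : 'I_d -> R) :
 ((X + Z *m X)^T *m Am *m \col_k v k) 0 0 =
   \sum_l X l 0 * (\sum_k Am l k * v k + \sum_i \sum_k Am i k * Z i l * v k).
Proof.
rewrite mxE.
under eq_bigr => k _ do rewrite !mxE big_distrl /=.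
under eq_bigr => k _ do under eq_bigr => m _ do rewrite !mxE mulrDl mulrDl big_distrl big_distrl /=.
under eq_bigr => k _ do rewrite big_split /=.
rewrite big_split /=.
under [X in _ = X]eq_bigr => l _ do rewrite mulrDr.
rewrite big_split /=; congr (_ + _).
  rewrite exchange_big /=; apply: eq_bigr => l _; rewrite mulr_sumr.
  by apply: eq_bigr => k _; ring.
rewrite exchange_big /=.
under eq_bigr => m _ do rewrite exchange_big /=.
rewrite exchange_big /=.
apply: eq_bigr => l _; rewrite mulr_sumr; apply: eq_bigr => m _; rewrite mulr_sumr.
by apply: eq_bigr => k _; ring.
Qed.


Lemma L2S {R : realType} {disp : measure_display} {T : measurableType disp}
  (mu : probability T R) (I : Type) (s : seq I) (h : I -> T -> R) :
  (forall i, L2 mu (h i)) -> L2 mu (fun w => \sum_(i <- s) h i w).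
Proof.
move=> hh; elim: s => [|i s IH].
  have -> : (fun w => \sum_(i <- [::]) h i w) = (fun _ => 0) by apply/funext => w; rewrite big_nil.
  have h0 : forall w : T, `|(fun _ : T => (0:R)) w| <= 0 by move=> w; rewrite normr0.
  exact: L2_bnd (measurable_cst _) h0.
have -> : (fun w => \sum_(j <- i :: s) h j w) = (fun w => h i w + \sum_(j <- s) h j w).
  by apply/funext => w; rewrite big_cons.
exact: L2D.
Qed.

Unset Implicit Arguments.

Theorem mainTheorem13 (R : realType) (d : nat) (disp : measure_display)
  (Omega : measurableType disp) (mu : probability Omega R)
  (tau : 'rV[R]_d -> Omega -> Omega) (sigma : Omega -> 'M[R]_d) (Lam : R)
  (da : 'I_d -> 'I_d -> Omega -> R)
  (u : R -> 'I_d -> Omega -> R) (Du : R -> 'I_d -> 'I_d -> Omega -> R)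
  (zeta : Omega -> 'M[R]_d) :
  mp_group mu tau -> ergodic mu tau -> jointly_measurable tau ->
  (forall k l, measurable_fun setT (fun w => sigma w k l)) ->
  (forall w k l, smooth (fun x => sigma (tau x w) k l)) ->
  (forall k l (s : seq 'I_d), exists M : R, forall w x,
      `|iderive s (fun y => sigma (tau y w) k l) x| <= M) ->
  0 < Lam ->
  (forall w (xi : 'rV[R]_d),
      Lam * (xi *m xi^T) 0 0 <= (xi *m amat sigma w *m xi^T) 0 0
      <= Lam^-1 * (xi *m xi^T) 0 0) ->
  (forall i j, isD mu tau i (fun w => amat sigma w i j) (da i j)) ->
  (forall lam, 0 < lam -> forall j,
      inH mu tau (u lam j) (Du lam j) /\
      forall phi Dphi, inH mu tau phi Dphi ->
        lam * ip mu (u lam j) phi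
        + 2^-1 * expect mu (fun w => \sum_(i < d) \sum_(k < d)
                              amat sigma w i k * Du lam j i w * Dphi k w)
        = ip mu (bvec da j) phi) ->
  (forall i j, L2 mu (fun w => zeta w i j)) ->
  (forall j, (fun lam => lam * ip mu (u lam j) (u lam j)
        + Num.sqrt (\sum_(i < d) ip mu (fun w => Du lam j i w - zeta w i j)
                                       (fun w => Du lam j i w - zeta w i j)))
      @ 0^'+ --> 0) ->
  forall (X : 'cV[R]_d) (psi : Omega -> R) (Dpsi : 'I_d -> Omega -> R),
    inH mu tau psi Dpsi ->
    expect mu (fun w => ((X + zeta w *m X)^T *m amat sigma w *m \col_k Dpsi k w) 0 0) = 0.
Proof.
move=> [mtau tau0 tauD ptau] _ _ smeas _ sbnd _ _ Hda Hu Hz Hconv X psi Dpsi HpsiH.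
have [Lpsi DpsiD _] := HpsiH.
have LDpsi : forall k, L2 mu (Dpsi k) by move=> k; case: (DpsiD k).
have [S hS] : exists S, forall k l w, `|sigma w k l| <= S.
  have hkl : forall p : 'I_d * 'I_d, exists M, forall w, `|sigma w p.1 p.2| <= M.
    move=> [k l]; have [M HM] := sbnd k l [::]; exists M => w.
    by have := HM w 0; rewrite /= tau0.
  have [M HM] := choice hkl.
  exists (\sum_p `|M p|) => k l w; apply: le_trans (HM (k, l) w) _.
  apply: le_trans (ler_norm _) _.
  by rewrite (bigD1 (k, l)) //= lerDl sumr_ge0.
pose a i k w := amat sigma w i k.
pose A := \sum_(k < d) S * S.
have abnd : forall i k w, `|a i k w| <= A.
  move=> i k w; rewrite /a amatE; apply: le_trans (ler_norm_sum _ _ _) _.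
  apply: ler_sum => m _; rewrite normrM.
  by apply: ler_pM; rewrite ?normr_ge0.
have La : forall i k, L2 mu (a i k) by move=> i k; case: (Hda i k).
have ameas : forall i k, measurable_fun setT (a i k) by move=> i k; exact: L2_meas.
have IBP : forall i j, ip mu (da i j) psi + ip mu (a i j) (Dpsi i) = 0.
  by move=> i j; apply: (ibp mtau ptau (Hda i j) (abnd i j) (DpsiD i)).
have Lda : forall i j, L2 mu (da i j) by move=> i j; case: (Hda i j).
have Eb : forall j, ip mu (bvec da j) psi = - (2^-1 * \sum_(i < d) ip mu (a i j) (Dpsi i)).
  move=> j; have LS : L2 mu (fun w => \sum_(i < d) da i j w) by apply: L2S => i; exact: Lda.
  rewrite /bvec ipZ1 // ip_sum1 //.
  rewrite -mulrN -sumrN; congr (_ * _); apply: eq_bigr => i _.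
  by apply/eqP; rewrite -addr_eq0 IBP.
have W : forall j, expect mu (fun w => \sum_(i < d) \sum_(k < d) a i k w * zeta w i j * Dpsi k w)
    = - \sum_(i < d) ip mu (a i j) (Dpsi i).
  move=> j.
  have Lu : forall lam, 0 < lam -> L2 mu (u lam j) by move=> lam l0; case: (Hu lam l0 j).1.
  have LDu : forall lam, 0 < lam -> forall i, L2 mu (Du lam j i).
    by move=> lam l0 i; case: (Hu lam l0 j).1 => _ hD _; case: (hD i).
  have weak : forall lam, 0 < lam -> lam * ip mu (u lam j) psi
      + 2^-1 * expect mu (fun w => \sum_(i < d) \sum_(k < d) a i k w * Du lam j i w * Dpsi k w)
      = ip mu (bvec da j) psi.
    by move=> lam l0; exact: (Hu lam l0 j).2 psi Dpsi HpsiH.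
  have := @limit_id R d disp Omega mu a A ameas abnd (fun lam => u lam j) (fun lam i => Du lam j i)
    (fun i w => zeta w i j) psi Dpsi (ip mu (bvec da j) psi) Lu LDu (fun i => Hz i j) Lpsi LDpsi weak (Hconv j).
  rewrite Eb => H.
  have := congr1 (fun x => 2 * x) H.
  by rewrite mulrA divff // mul1r mulrN mulrA divff // mul1r.
have IA : forall l, Int mu (fun w => \sum_(k < d) a l k w * Dpsi k w).
  by move=> l; apply: IntS => k; exact: L2_prod.
have IW : forall l, Int mu (fun w => \sum_(i < d) \sum_(k < d) a i k w * zeta w i l * Dpsi k w).
  move=> l; apply: IntS => i; apply: IntS => k; apply: L2_prod => //.
  exact: L2_bndM (ameas i k) (abnd i k) (Hz i l).
rewrite /expect.
transitivity (Rintegral mu setT (fun w => \sum_l X l 0 * ((\sum_(k < d) a l k w * Dpsi k w)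
   + \sum_(i < d) \sum_(k < d) a i k w * zeta w i l * Dpsi k w))).
  by apply: eq_Rintegral => w _; rewrite mx_expand.
rewrite Rint_sum; last by move=> l; apply: IntZ; exact: IntD.
apply: big1 => l _.
rewrite RintegralZl //; last exact: IntD.
rewrite (RintegralD measurableT (IA l) (IW l)).
have := W l; rewrite /expect => ->.
rewrite Rint_sum; last by move=> k; exact: L2_prod.
have -> : \sum_(k < d) Rintegral mu setT (fun w => a l k w * Dpsi k w) = \sum_(i < d) ip mu (a i l) (Dpsi i).
  apply: eq_bigr => k _; rewrite /ip; apply: eq_Rintegral => w _.
  by rewrite /a amat_sym.
by rewrite subrr mulr0.
Qed.
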